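(* Let $X$ be a Tychonoff space. The following are equivalent: (1) $C_m(X)$ is $\sigma$-compact; (2) $C_m(X)$ is strictly H-bounded; (3) $C_m(X)$ is H-bounded; (4) $C_m(X)$ is strictly M-bounded; (5) $C_m(X)$ is M-bounded; (6) $C_u(X)$ is M-bounded; (7) $X$ is finite; (8) $C_p(X)$ is $\sigma$-compact.
   Context: $C(X)$ is the set of continuous real-valued functions on $X$, a topological group under pointwise addition with identity the zero function. $C_p(X)$: pointwise convergence topology. $C_u(X)$: uniform convergence topology (basic neighborhoods $\{g:|g(x)-f(x)|<\varepsilon\ \forall x\in X\}$, $\varepsilon>0$). $C_m(X)$: $m$-topology (basic neighborhoods $\{g:|g(x)-f(x)|<\varepsilon(x)\ \forall x\}$, $\varepsilon\in C(X)$ strictly positive). For a topological group $G$ with identity $e$: M-bounded means for every sequence $(U_n)$ of neighborhoods of $e$ there are finite $A_n\subset G$ with $G=\bigcup_nA_nU_n$; H-bounded means there are finite $A_n$ with each $x\in G$ in all but finitely many $A_nU_n$. In the game where in round $n$ ONE picks a neighborhood $U_n$ of $e$ and TWO a finite $A_n\subset G$, $G$ is strictly M-bounded (resp. strictly H-bounded) if TWO has a strategy guaranteeing $G=\bigcup_nA_nU_n$ (resp. each $x\in G$ lies in all but finitely many $A_nU_n$). *)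

(* Defs.v *)
From Stdlib Require Import Reals Lra List.
Open Scope R_scope.
Set Implicit Arguments.

Definition is_topology {X : Type} (tau : (X -> Prop) -> Prop) : Prop :=
  tau (fun _ => True) /\
  (forall U V, tau U -> tau V -> tau (fun x => U x /\ V x)) /\
  (forall (F : (X -> Prop) -> Prop),
      (forall U, F U -> tau U) -> tau (fun x => exists U, F U /\ U x)).

Definition closed_set {X : Type} (tau : (X -> Prop) -> Prop) (F : X -> Prop) : Prop :=
  tau (fun x => ~ F x).

Definition continuous_R {X : Type} (tau : (X -> Prop) -> Prop) (f : X -> R) : Prop :=
  forall x eps, 0 < eps ->
    exists V, tau V /\ V x /\ forall y, V y -> Rabs (f y - f x) < eps.

Definition T1 {X : Type} (tau : (X -> Prop) -> Prop) : Prop :=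
  forall x y : X, x <> y -> exists U, tau U /\ U x /\ ~ U y.

Definition completely_regular {X : Type} (tau : (X -> Prop) -> Prop) : Prop :=
  forall (F : X -> Prop) (x : X), closed_set tau F -> ~ F x ->
    exists f : X -> R, continuous_R tau f /\ f x = 0 /\ (forall y, F y -> f y = 1).

Definition tychonoff {X : Type} (tau : (X -> Prop) -> Prop) : Prop :=
  T1 tau /\ completely_regular tau.

Definition finite_type (X : Type) : Prop := exists l : list X, forall x, In x l.

Definition compact_subset {T : Type} (tau : (T -> Prop) -> Prop) (K : T -> Prop) : Prop :=
  forall (C : (T -> Prop) -> Prop),
    (forall U, C U -> tau U) ->
    (forall x, K x -> exists U, C U /\ U x) ->
    exists l : list (T -> Prop),
      (forall U, In U l -> C U) /\ (forall x, K x -> exists U, In U l /\ U x).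

Definition sigma_compact {T : Type} (tau : (T -> Prop) -> Prop) : Prop :=
  exists K : nat -> (T -> Prop),
    (forall n, compact_subset tau (K n)) /\ (forall x, exists n, K n x).

(** Topology generated by a neighbourhood base [B f N] ("N is a basic nbhd of f"). *)
Definition gen_top {T : Type} (B : T -> (T -> Prop) -> Prop) (U : T -> Prop) : Prop :=
  forall f, U f -> exists N, B f N /\ forall g, N g -> U g.

Definition nbhd {T : Type} (tau : (T -> Prop) -> Prop) (e : T) (V : T -> Prop) : Prop :=
  exists U, tau U /\ U e /\ forall g, U g -> V g.

Definition translate_set {T : Type} (add : T -> T -> T) (A : list T) (U : T -> Prop)
  (x : T) : Prop :=
  exists a u, In a A /\ U u /\ x = add a u.

Definition M_bounded {T : Type} (add : T -> T -> T) (e : T)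
  (tau : (T -> Prop) -> Prop) : Prop :=
  forall U : nat -> (T -> Prop), (forall n, nbhd tau e (U n)) ->
    exists A : nat -> list T, forall x, exists n, translate_set add (A n) (U n) x.

Definition H_bounded {T : Type} (add : T -> T -> T) (e : T)
  (tau : (T -> Prop) -> Prop) : Prop :=
  forall U : nat -> (T -> Prop), (forall n, nbhd tau e (U n)) ->
    exists A : nat -> list T, forall x, exists N, forall n, (N <= n)%nat ->
      translate_set add (A n) (U n) x.

(** The moves of ONE up to round n (rounds numbered from 0). *)
Definition history {T : Type} (U : nat -> (T -> Prop)) (n : nat) : list (T -> Prop) :=
  map U (seq 0 (S n)).

(** A strategy of TWO maps the history of ONE's moves to a finite set. *)
Definition strictly_M_bounded {T : Type} (add : T -> T -> T) (e : T)
  (tau : (T -> Prop) -> Prop) : Prop :=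
  exists sigma : list (T -> Prop) -> list T,
    forall U : nat -> (T -> Prop), (forall n, nbhd tau e (U n)) ->
      forall x, exists n, translate_set add (sigma (history U n)) (U n) x.

Definition strictly_H_bounded {T : Type} (add : T -> T -> T) (e : T)
  (tau : (T -> Prop) -> Prop) : Prop :=
  exists sigma : list (T -> Prop) -> list T,
    forall U : nat -> (T -> Prop), (forall n, nbhd tau e (U n)) ->
      forall x, exists N, forall n, (N <= n)%nat ->
        translate_set add (sigma (history U n)) (U n) x.

Definition CX {X : Type} (tau : (X -> Prop) -> Prop) : Type :=
  { f : X -> R | continuous_R tau f }.

Definition cval {X : Type} {tau : (X -> Prop) -> Prop} (f : CX tau) : X -> R :=
  proj1_sig f.

Lemma continuous_R_add {X : Type} (tau : (X -> Prop) -> Prop) (f g : X -> R) :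
  is_topology tau -> continuous_R tau f -> continuous_R tau g ->
  continuous_R tau (fun x => f x + g x).
Proof.
  intros [_ [Hint _]] Hf Hg x eps Heps.
  destruct (Hf x (eps / 2)) as [V [HV [HVx HVf]]]; [lra|].
  destruct (Hg x (eps / 2)) as [W [HW [HWx HWg]]]; [lra|].
  exists (fun y => V y /\ W y); split; [apply Hint; auto|split; [auto|]].
  intros y [Hy1 Hy2]. specialize (HVf y Hy1). specialize (HWg y Hy2).
  replace (f y + g y - (f x + g x)) with ((f y - f x) + (g y - g x)) by ring.
  eapply Rle_lt_trans; [apply Rabs_triang|]. lra.
Qed.

Lemma continuous_R_const {X : Type} (tau : (X -> Prop) -> Prop) (c : R) :
  is_topology tau -> continuous_R tau (fun _ => c).
Proof.
  intros [Hfull _] x eps Heps. exists (fun _ => True). repeat split; auto.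
  intros y _. unfold Rminus. rewrite Rplus_opp_r, Rabs_R0. exact Heps.
Qed.

Definition cadd {X : Type} {tau : (X -> Prop) -> Prop} (Ht : is_topology tau)
  (f g : CX tau) : CX tau :=
  exist _ (fun x => cval f x + cval g x)
    (continuous_R_add Ht (proj2_sig f) (proj2_sig g)).

Definition czero {X : Type} {tau : (X -> Prop) -> Prop} (Ht : is_topology tau) : CX tau :=
  exist _ (fun _ => 0) (continuous_R_const 0 Ht).

Definition Cp_top {X : Type} (tau : (X -> Prop) -> Prop) : (CX tau -> Prop) -> Prop :=
  gen_top (fun f N => exists (F : list X) (eps : R), 0 < eps /\
    forall g, N g <-> (forall x, In x F -> Rabs (cval g x - cval f x) < eps)).

Definition Cu_top {X : Type} (tau : (X -> Prop) -> Prop) : (CX tau -> Prop) -> Prop :=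
  gen_top (fun f N => exists eps : R, 0 < eps /\
    forall g, N g <-> (forall x, Rabs (cval g x - cval f x) < eps)).

Definition Cm_top {X : Type} (tau : (X -> Prop) -> Prop) : (CX tau -> Prop) -> Prop :=
  gen_top (fun f N => exists eps : CX tau, (forall x, 0 < cval eps x) /\
    forall g, N g <-> (forall x, Rabs (cval g x - cval f x) < cval eps x)).

(* Main.v *)
Require Import Defs.
From Stdlib Require Import ZArith Reals Lra Lia List ClassicalEpsilon FunctionalExtensionality PropExtensionality ProofIrrelevance Classical.
Open Scope R_scope.

Lemma cont_lip1 {X : Type} (tau : (X -> Prop) -> Prop) (phi : R -> R) (L : R) (f : X -> R) :
  0 <= L -> (forall a b, Rabs (phi a - phi b) <= L * Rabs (a - b)) ->
  continuous_R tau f -> continuous_R tau (fun x => phi (f x)).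
Proof.
  intros HL Hphi Hf x eps Heps.
  destruct (Hf x (eps / (L + 1))) as [V [HV [HVx HVf]]].
  { apply Rdiv_lt_0_compat; lra. }
  exists V; split; [auto|split; [auto|]].
  intros y Hy. specialize (HVf y Hy).
  eapply Rle_lt_trans; [apply Hphi|].
  assert (H0 : 0 <= Rabs (f y - f x)) by apply Rabs_pos.
  assert (H1 : Rabs (f y - f x) * (L + 1) < eps).
  { apply (Rmult_lt_compat_r (L+1)) in HVf; [|lra].
    unfold Rdiv in HVf. rewrite Rmult_assoc, Rinv_l in HVf; lra. }
  nra.
Qed.

Lemma cont_lip2 {X : Type} (tau : (X -> Prop) -> Prop) (phi : R -> R -> R) (f g : X -> R) :
  is_topology tau ->
  (forall a b c d, Rabs (phi a b - phi c d) <= Rabs (a - c) + Rabs (b - d)) ->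
  continuous_R tau f -> continuous_R tau g -> continuous_R tau (fun x => phi (f x) (g x)).
Proof.
  intros [_ [Hint _]] Hphi Hf Hg x eps Heps.
  destruct (Hf x (eps / 2)) as [V [HV [HVx HVf]]]; [lra|].
  destruct (Hg x (eps / 2)) as [W [HW [HWx HWg]]]; [lra|].
  exists (fun y => V y /\ W y); split; [apply Hint; auto|split; [auto|]].
  intros y [Hy1 Hy2]. specialize (HVf y Hy1). specialize (HWg y Hy2).
  eapply Rle_lt_trans; [apply Hphi|]. lra.
Qed.

Lemma cont_approx {X : Type} (tau : (X -> Prop) -> Prop) (F : X -> R) :
  (forall eps, 0 < eps -> exists G, continuous_R tau G /\ forall x, Rabs (F x - G x) < eps) ->
  continuous_R tau F.
Proof.
  intros H x eps Heps.
  destruct (H (eps/3)) as [G [HG HGF]]; [lra|].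
  destruct (HG x (eps/3)) as [V [HV [HVx HVG]]]; [lra|].
  exists V; split; [auto|split; [auto|]].
  intros y Hy. specialize (HVG y Hy). pose proof (HGF x). pose proof (HGF y).
  replace (F y - F x) with ((F y - G y) + (G y - G x) + (G x - F x)) by ring.
  eapply Rle_lt_trans; [apply Rabs_triang|].
  eapply Rle_lt_trans; [apply Rplus_le_compat_r; apply Rabs_triang|].
  rewrite (Rabs_minus_sym (G x)). lra.
Qed.

Lemma cont_discrete {X : Type} (tau : (X -> Prop) -> Prop) (f : X -> R) :
  (forall x, tau (fun y => y = x)) -> continuous_R tau f.
Proof.
  intros H x eps Heps. exists (fun y => y = x). split; [auto|split; [auto|]].
  intros y ->. unfold Rminus. rewrite Rplus_opp_r, Rabs_R0. exact Heps.
Qed.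

Lemma Rmax_lip : forall a b c d, Rabs (Rmax a b - Rmax c d) <= Rabs (a - c) + Rabs (b - d).
Proof.
  intros. unfold Rmax, Rabs. destruct (Rle_dec a b), (Rle_dec c d);
  repeat destruct Rcase_abs; lra.
Qed.

Lemma Rmin_lip : forall a b c d, Rabs (Rmin a b - Rmin c d) <= Rabs (a - c) + Rabs (b - d).
Proof.
  intros. unfold Rmin, Rabs. destruct (Rle_dec a b), (Rle_dec c d);
  repeat destruct Rcase_abs; lra.
Qed.

Lemma tau_ext {X : Type} (tau : (X -> Prop) -> Prop) (U V : X -> Prop) :
  (forall x, U x <-> V x) -> tau U -> tau V.
Proof.
  intros H HU. replace V with U; auto.
  apply functional_extensionality; intro x; apply propositional_extensionality; auto.
Qed.

Lemma compl_single_open {X : Type} (tau : (X -> Prop) -> Prop) (y : X) :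
  is_topology tau -> T1 tau -> tau (fun x => ~ x = y).
Proof.
  intros [_ [_ Hun]] HT1.
  apply (tau_ext tau (fun x => exists U, (tau U /\ ~ U y) /\ U x)).
  - intros x; split.
    + intros [U [[_ HUy] HUx]] ->. auto.
    + intros Hxy. destruct (HT1 x y Hxy) as [U [HU [HUx HUy]]]. exists U; auto.
  - apply Hun. intros U [HU _]; auto.
Qed.

Lemma lip_bumpfun : forall a b,
  Rabs (Rmax 0 (1 - Rabs a) - Rmax 0 (1 - Rabs b)) <= 1 * Rabs (a - b).
Proof.
  intros. rewrite Rmult_1_l. pose proof (Rabs_triang_inv a b). pose proof (Rabs_triang_inv b a).
  rewrite (Rabs_minus_sym b a) in H0.
  unfold Rmax. destruct (Rle_dec 0 (1 - Rabs a)), (Rle_dec 0 (1 - Rabs b));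
  unfold Rabs at 1; destruct Rcase_abs; try lra;
  pose proof (Rabs_pos a); pose proof (Rabs_pos b); lra.
Qed.

Lemma bump {X : Type} (tau : (X -> Prop) -> Prop) (Ht : is_topology tau) (Hty : tychonoff tau)
  (x0 : X) (ys : list X) : (forall y, In y ys -> y <> x0) ->
  exists phi : X -> R, continuous_R tau phi /\ phi x0 = 1 /\ (forall y, In y ys -> phi y = 0) /\
    (forall x, 0 <= phi x <= 1).
Proof.
  induction ys as [|y ys IH]; intros Hys.
  - exists (fun _ => 1). split; [apply continuous_R_const; auto|].
    split; [auto|split; [intros y []|intros; lra]].
  - destruct IH as [phi [Hc [H0 [Hz Hb]]]]. { intros z Hz. apply Hys; simpl; auto. }
    destruct Hty as [HT1 Hcr].
    destruct (Hcr (fun z => z = y) x0) as [f [Hf [Hf0 Hf1]]].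
    { unfold closed_set. eapply tau_ext; [|apply (compl_single_open tau y); auto]. intros; tauto. }
    { intro E. apply (Hys y); simpl; auto. }
    exists (fun x => Rmin (Rmax 0 (1 - Rabs (f x))) (phi x)).
    split; [|split; [|split]].
    + apply (cont_lip2 tau Rmin (fun x => Rmax 0 (1 - Rabs (f x))) phi Ht Rmin_lip); auto.
      apply (cont_lip1 tau (fun t => Rmax 0 (1 - Rabs t)) 1 f); auto; [lra|apply lip_bumpfun].
    + rewrite Hf0, H0, Rabs_R0. unfold Rmin, Rmax.
      repeat destruct Rle_dec; lra.
    + intros z [<-|Hz']. 
      * rewrite (Hf1 y eq_refl), Rabs_R1. specialize (Hb y). unfold Rmin, Rmax.
        repeat destruct Rle_dec; lra.
      * rewrite (Hz z Hz'). specialize (Hb z). unfold Rmin, Rmax. repeat destruct Rle_dec; lra.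
    + intros x. specialize (Hb x). pose proof (Rabs_pos (f x)). unfold Rmin, Rmax.
      repeat destruct Rle_dec; lra.
Qed.

Lemma nbhd_list {X : Type} (tau : (X -> Prop) -> Prop) (Ht : is_topology tau)
  (x0 : X) (L : list (X -> R)) (r : R) : 0 < r ->
  (forall a, In a L -> continuous_R tau a) ->
  exists V, tau V /\ V x0 /\ forall a y, In a L -> V y -> Rabs (a y - a x0) < r.
Proof.
  intros Hr. induction L as [|a L IH]; intros HL.
  - exists (fun _ => True). destruct Ht as [Hfull _]. split; auto. split; auto. intros a y [].
  - destruct IH as [V [HV [HVx HVa]]]. { intros b Hb; apply HL; simpl; auto. }
    destruct (HL a (or_introl eq_refl) x0 r Hr) as [W [HW [HWx HWa]]].
    exists (fun y => V y /\ W y). destruct Ht as [_ [Hint _]].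
    split; [apply Hint; auto|split; [auto|]].
    intros b y [<-|Hb] [Hy1 Hy2]; auto.
Qed.

Lemma sep_list {X : Type} (tau : (X -> Prop) -> Prop) (Ht : is_topology tau) (HT1 : T1 tau)
  (x : X) (ys : list X) :
  exists V, tau V /\ V x /\ forall z, In z ys -> z <> x -> ~ V z.
Proof.
  induction ys as [|y ys IH].
  - exists (fun _ => True). destruct Ht as [Hfull _]. split; [auto|split; [exact I|intros z []]].
  - destruct IH as [V [HV [HVx HVz]]].
    destruct (classic (y = x)) as [Hyx|Hyx].
    + exists V. split; auto. split; auto. intros z [<-|Hz] Hzx; [congruence|auto].
    + destruct (HT1 x y (fun E => Hyx (eq_sym E))) as [W [HW [HWx HWy]]].
      exists (fun z => V z /\ W z). destruct Ht as [_ [Hint _]].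
      split; [apply Hint; auto|split; [auto|]].
      intros z [<-|Hz] Hzx [H1 H2]; [auto|]. apply (HVz z Hz Hzx H1).
Qed.

Lemma finite_discrete {X : Type} (tau : (X -> Prop) -> Prop) (Ht : is_topology tau) (HT1 : T1 tau) :
  finite_type X -> forall x, tau (fun y => y = x).
Proof.
  intros [l Hl] x. destruct (sep_list tau Ht HT1 x l) as [V [HV [HVx HVz]]].
  apply (tau_ext tau V); auto. intros y; split.
  - intros Hy. apply NNPP; intro Hyx. exact (HVz y (Hl y) Hyx Hy).
  - intros ->; auto.
Qed.

Lemma nonisolated {X : Type} (tau : (X -> Prop) -> Prop) (x0 : X) :
  ~ tau (fun y => y = x0) -> forall V, tau V -> V x0 -> exists y, y <> x0 /\ V y.
Proof.
  intros Hn V HV HVx. apply NNPP; intro Hc. apply Hn. apply (tau_ext tau V); auto.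
  intros y; split.
  - intros Hy. apply NNPP; intro Hyx. apply Hc. exists y; auto.
  - intros ->; auto.
Qed.

Fixpoint gmax {X : Type} (phi : nat -> X -> R) (N : nat) (x : X) : R :=
  match N with 0 => phi 0%nat x | S n => Rmax (gmax phi n x) (phi (S n) x) end.

Lemma gmax_ge {X : Type} (phi : nat -> X -> R) N x k : (k <= N)%nat -> phi k x <= gmax phi N x.
Proof.
  induction N; intros Hk; simpl.
  - inversion Hk; subst; lra.
  - inversion Hk; subst. + apply Rmax_r. + eapply Rle_trans; [apply IHN; auto|apply Rmax_l].
Qed.

Lemma gmax_le {X : Type} (phi : nat -> X -> R) N x M : (forall k, (k <= N)%nat -> phi k x <= M) ->
  gmax phi N x <= M.
Proof.
  induction N; intros H; simpl.
  - apply H; auto.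
  - apply Rmax_lub; [apply IHN; intros; apply H; auto|apply H; auto].
Qed.

Lemma gmax_cont {X : Type} (tau : (X -> Prop) -> Prop) (Ht : is_topology tau) (phi : nat -> X -> R) N :
  (forall k, continuous_R tau (phi k)) -> continuous_R tau (gmax phi N).
Proof.
  intros H. induction N; simpl; auto.
  apply (cont_lip2 tau Rmax (gmax phi N) (phi (S N)) Ht Rmax_lip); auto.
Qed.

Lemma small_inv (eps : R) : 0 < eps -> exists N : nat, / (INR N + 2) < eps.
Proof.
  intros He. destruct (archimed (/ eps)) as [H1 _].
  assert (Hp : 0 < / eps) by (apply Rinv_0_lt_compat; auto).
  exists (Z.to_nat (up (/ eps))).
  assert (Hz : (0 <= up (/ eps))%Z). { apply le_IZR. lra. }
  rewrite INR_IZR_INZ, Z2Nat.id by auto.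
  rewrite <- (Rinv_inv eps) at 2. apply Rinv_lt_contravar; [|lra].
  apply Rmult_lt_0_compat; lra.
Qed.

Lemma sup_fun {X : Type} (tau : (X -> Prop) -> Prop) (Ht : is_topology tau) (phi : nat -> X -> R) :
  (forall k, continuous_R tau (phi k)) -> (forall k x, 0 <= phi k x <= / (INR k + 1)) ->
  exists F, continuous_R tau F /\ (forall k x, phi k x <= F x) /\
    (forall x M, (forall k, phi k x <= M) -> F x <= M).
Proof.
  intros Hc Hb.
  assert (Hex : forall x, exists m, is_lub (fun v => exists k, v = phi k x) m).
  { intros x. destruct (completeness (fun v => exists k, v = phi k x)) as [m Hm].
    - exists 1. intros v [k ->]. destruct (Hb k x) as [_ H]. eapply Rle_trans; [apply H|].
      rewrite <- Rinv_1. apply Rinv_le_contravar; [lra|]. pose proof (pos_INR k). lra.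
    - exists (phi 0%nat x). exists 0%nat; auto.
    - exists m; auto. }
  set (F := fun x => epsilon (inhabits 0) (fun m => is_lub (fun v => exists k, v = phi k x) m)).
  assert (HF : forall x, is_lub (fun v => exists k, v = phi k x) (F x)).
  { intros x. apply (epsilon_spec (inhabits 0) (fun m => is_lub (fun v => exists k, v = phi k x) m)). auto. }
  assert (Hup : forall k x, phi k x <= F x). { intros k x. apply (proj1 (HF x)). exists k; auto. }
  assert (Hlub : forall x M, (forall k, phi k x <= M) -> F x <= M).
  { intros x M HM. apply (proj2 (HF x)). intros v [k ->]. auto. }
  exists F. split; [|split; auto].
  apply cont_approx. intros eps Heps. destruct (small_inv eps Heps) as [N HN].
  exists (gmax phi N). split; [apply gmax_cont; auto|].
  intros x. assert (H1 : gmax phi N x <= F x) by (apply gmax_le; intros; apply Hup).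
  assert (H2 : F x <= gmax phi N x + / (INR N + 2)).
  { apply Hlub. intros k. destruct (le_lt_dec k N) as [Hk|Hk].
    - pose proof (gmax_ge phi N x k Hk). assert (0 < / (INR N + 2)).
      { apply Rinv_0_lt_compat. pose proof (pos_INR N). lra. } lra.
    - pose proof (gmax_ge phi N x 0 (le_0_n N)). destruct (Hb 0%nat x).
      destruct (Hb k x) as [_ Hk2]. eapply Rle_trans; [apply Hk2|].
      assert (/ (INR k + 1) <= / (INR N + 2)).
      { apply Rinv_le_contravar. pose proof (pos_INR N). lra.
        assert (HH := le_INR (S N) k Hk). rewrite S_INR in HH. lra. }
      lra. }
  rewrite Rabs_right; lra.
Qed.

Lemma cx_eq {X : Type} {tau : (X -> Prop) -> Prop} (f g : CX tau) :
  (forall x, cval f x = cval g x) -> f = g.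
Proof.
  destruct f as [f Hf], g as [g Hg]. unfold cval; simpl. intros H.
  assert (f = g) by (apply functional_extensionality; auto). subst.
  f_equal. apply proof_irrelevance.
Qed.

Definition cconst {X : Type} {tau : (X -> Prop) -> Prop} (Ht : is_topology tau) (c : R) : CX tau :=
  exist _ (fun _ => c) (continuous_R_const c Ht).

Lemma Cu_Cm {X : Type} (tau : (X -> Prop) -> Prop) (Ht : is_topology tau) U :
  @Cu_top X tau U -> @Cm_top X tau U.
Proof.
  intros HU f Hf. destruct (HU f Hf) as [N [[eps [He HN]] HNU]].
  exists N. split; auto. exists (cconst Ht eps). split; [intros; simpl; auto|].
  intros g. rewrite HN. simpl. tauto.
Qed.

Lemma Cp_Cm {X : Type} (tau : (X -> Prop) -> Prop) (Ht : is_topology tau) U :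
  @Cp_top X tau U -> @Cm_top X tau U.
Proof.
  intros HU f Hf. destruct (HU f Hf) as [N [[F [eps [He HN]]] HNU]].
  exists (fun g => forall x, Rabs (cval g x - cval f x) < eps). split.
  - exists (cconst Ht eps). split; [intros; simpl; auto|]. intros g; simpl; tauto.
  - intros g Hg. apply HNU. apply HN. intros; auto.
Qed.

Lemma M_mono {T : Type} (add : T -> T -> T) e (t1 t2 : (T -> Prop) -> Prop) :
  (forall U, t1 U -> t2 U) -> M_bounded add e t2 -> M_bounded add e t1.
Proof.
  intros H HM U HU. apply HM. intros n. destruct (HU n) as [W [HW [HWe HWU]]].
  exists W; auto.
Qed.

Lemma compact_mono {T : Type} (t1 t2 : (T -> Prop) -> Prop) K :
  (forall U, t1 U -> t2 U) -> compact_subset t2 K -> compact_subset t1 K.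
Proof. intros H HK C HC Hcov. apply HK; auto. Qed.

Lemma sigma_mono {T : Type} (t1 t2 : (T -> Prop) -> Prop) :
  (forall U, t1 U -> t2 U) -> sigma_compact t2 -> sigma_compact t1.
Proof.
  intros H [K [HK Hc]]. exists K. split; auto. intros n; apply (compact_mono t1 t2); auto.
Qed.

Lemma sH_H {T : Type} (add : T -> T -> T) e t : strictly_H_bounded add e t -> H_bounded add e t.
Proof. intros [s Hs] U HU. exists (fun n => s (history U n)). auto. Qed.

Lemma sH_sM {T : Type} (add : T -> T -> T) e t : strictly_H_bounded add e t -> strictly_M_bounded add e t.
Proof. intros [s Hs]. exists s. intros U HU x. destruct (Hs U HU x) as [N HN]. exists N. auto. Qed.

Lemma H_M {T : Type} (add : T -> T -> T) e t : H_bounded add e t -> M_bounded add e t.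
Proof. intros HH U HU. destruct (HH U HU) as [A HA]. exists A. intros x. destruct (HA x) as [N HN]. exists N; auto. Qed.

Lemma sM_M {T : Type} (add : T -> T -> T) e t : strictly_M_bounded add e t -> M_bounded add e t.
Proof. intros [s Hs] U HU. exists (fun n => s (history U n)). auto. Qed.

Lemma Cu_ball_nbhd {X : Type} (tau : (X -> Prop) -> Prop) (Ht : is_topology tau) (r : R) :
  0 < r -> nbhd (@Cu_top X tau) (czero Ht) (fun g => forall x, Rabs (cval g x) < r).
Proof.
  intros Hr. exists (fun g : CX tau => exists s, s < r /\ forall x, Rabs (cval g x) <= s).
  split; [|split].
  - intros f [s [Hs Hf]]. exists (fun g => forall x, Rabs (cval g x - cval f x) < (r - s)/2).
    split. + exists ((r - s)/2). split; [lra|tauto].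
    + intros g Hg. exists (s + (r - s)/2). split; [lra|]. intros x.
      specialize (Hg x). specialize (Hf x).
      replace (cval g x) with ((cval g x - cval f x) + cval f x) by ring.
      eapply Rle_trans; [apply Rabs_triang|]. lra.
  - exists 0. split; auto. intros x. simpl. rewrite Rabs_R0. lra.
  - intros g [s [Hs Hg]] x. specialize (Hg x). lra.
Qed.

Fixpoint pts {X : Type} (nx : list X -> X) (n : nat) : list X :=
  match n with 0 => nil | S n => nx (pts nx n) :: pts nx n end.

Lemma pts_in {X : Type} (nx : list X -> X) m n : (m < n)%nat -> In (nx (pts nx m)) (pts nx n).
Proof.
  induction n; intros H; [inversion H|]. simpl.
  inversion H; subst; [left; auto|right; apply IHn; lia].
Qed.

Lemma inf_seq {X : Type} : ~ finite_type X -> exists xs : nat -> X, forall m n, xs m = xs n -> m = n.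
Proof.
  intros Hnf.
  assert (Hnew : forall l : list X, exists x, ~ In x l).
  { intros l. apply NNPP; intro Hc. apply Hnf. exists l. intros x. apply NNPP; intro Hx. apply Hc; eauto. }
  destruct (Hnew nil) as [x0 _].
  set (nx := fun l : list X => epsilon (inhabits x0) (fun x => ~ In x l)).
  assert (Hnx : forall l, ~ In (nx l) l).
  { intros l. apply (epsilon_spec (inhabits x0) (fun x => ~ In x l)). apply Hnew. }
  exists (fun n => nx (pts nx n)). intros m n E.
  destruct (Nat.lt_trichotomy m n) as [Hl|[He|Hl]]; auto.
  - exfalso. apply (Hnx (pts nx n)). rewrite <- E. apply pts_in; auto.
  - exfalso. apply (Hnx (pts nx m)). rewrite E. apply pts_in; auto.
Qed.

Lemma idx_spec {X : Type} (xs : nat -> X) (Hinj : forall m n, xs m = xs n -> m = n) n :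
  epsilon (inhabits 0%nat) (fun k => xs n = xs k) = n.
Proof.
  symmetry. apply Hinj. apply (epsilon_spec (inhabits 0%nat) (fun k => xs n = xs k)). eauto.
Qed.

Definition sumabs {X : Type} {tau : (X -> Prop) -> Prop} (L : list (CX tau)) (x : X) : R :=
  fold_right (fun a acc => Rabs (cval a x) + acc) 0 L.

Lemma sumabs_ge {X : Type} {tau : (X -> Prop) -> Prop} (L : list (CX tau)) x :
  0 <= sumabs L x /\ forall a, In a L -> Rabs (cval a x) <= sumabs L x.
Proof.
  induction L as [|b L IH]; simpl.
  - split; [lra|intros a []].
  - destruct IH as [H0 H1]. pose proof (Rabs_pos (cval b x)). split; [lra|].
    intros a [<-|Ha]; [lra|]. specialize (H1 a Ha). lra.
Qed.

Lemma Ma_discrete {X : Type} (tau : (X -> Prop) -> Prop) (Ht : is_topology tau) :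
  (forall x, tau (fun y => y = x)) -> ~ finite_type X ->
  ~ M_bounded (cadd Ht) (czero Ht) (@Cu_top X tau).
Proof.
  intros Hd Hnf HM. destruct (inf_seq Hnf) as [xs Hinj].
  destruct (HM (fun n g => forall x, Rabs (cval g x) < 1)) as [A HA].
  { intros n. apply Cu_ball_nbhd. lra. }
  set (idx := fun x => epsilon (inhabits 0%nat) (fun k => x = xs k)).
  set (f := fun x => 2 + sumabs (A (idx x)) x).
  destruct (HA (exist _ f (cont_discrete tau f Hd))) as [n [a [u [Ha [Hu E]]]]].
  apply (f_equal cval) in E. apply (f_equal (fun h => h (xs n))) in E.
  unfold cval at 1 in E; simpl in E. unfold f, idx in E. rewrite idx_spec in E by auto.
  destruct (sumabs_ge (A n) (xs n)) as [_ H1]. specialize (H1 a Ha). specialize (Hu (xs n)).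
  unfold cadd, cval in E; simpl in E. unfold cval in H1, Hu.
  pose proof (Rabs_triang (proj1_sig a (xs n)) (proj1_sig u (xs n))).
  rewrite <- E in H. rewrite Rabs_right in H; [lra|].
  pose proof (Rabs_pos (proj1_sig a (xs n))). lra.
Qed.

Lemma Cp_open_pt {X : Type} (tau : (X -> Prop) -> Prop) (y : X) (P : R -> Prop) :
  (forall t, P t -> exists d, 0 < d /\ forall s, Rabs (s - t) < d -> P s) ->
  @Cp_top X tau (fun h => P (cval h y)).
Proof.
  intros HP h Hh. destruct (HP _ Hh) as [d [Hd Hs]].
  exists (fun g => forall x, In x (y :: nil) -> Rabs (cval g x - cval h x) < d). split.
  - exists (y :: nil), d. split; auto. tauto.
  - intros g Hg. apply Hs. apply Hg. simpl; auto.
Qed.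

Lemma Sp_discrete {X : Type} (tau : (X -> Prop) -> Prop) (Ht : is_topology tau) :
  (forall x, tau (fun y => y = x)) -> ~ finite_type X -> ~ sigma_compact (@Cp_top X tau).
Proof.
  intros Hd Hnf [K [HK Hcov]]. destruct (inf_seq Hnf) as [xs Hinj].
  assert (Hbd : forall n, exists M, forall h, K n h -> Rabs (cval h (xs n)) < M).
  { intros n.
    destruct (HK n (fun U => exists j : nat, U = (fun h : CX tau => Rabs (cval h (xs n)) < INR j)))
      as [L [HL1 HL2]].
    - intros U [j ->]. apply (Cp_open_pt tau (xs n) (fun t => Rabs t < INR j)).
      intros t Ht'. exists (INR j - Rabs t). split; [lra|]. intros s Hs.
      replace s with ((s - t) + t) by ring. eapply Rle_lt_trans; [apply Rabs_triang|]. lra.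
    - intros h _. destruct (archimed (Rabs (cval h (xs n)))) as [H1 _].
      exists (fun g : CX tau => Rabs (cval g (xs n)) < INR (Z.to_nat (up (Rabs (cval h (xs n)))))).
      split; [eauto|]. simpl. assert (Hz : (0 <= up (Rabs (cval h (xs n))))%Z).
      { apply le_IZR. pose proof (Rabs_pos (cval h (xs n))). lra. }
      rewrite INR_IZR_INZ, Z2Nat.id by auto. auto.
    - assert (Hm : exists M, forall U, In U L -> forall h, U h -> Rabs (cval h (xs n)) < M).
      { clear HL2. induction L as [|U L IH].
        - exists 0. intros U [].
        - destruct IH as [M HM]. { intros V HV; apply HL1; simpl; auto. }
          destruct (HL1 U (or_introl eq_refl)) as [j ->].
          exists (Rmax M (INR j)). intros V [<-|HV] h Hh.
          + eapply Rlt_le_trans; [apply Hh|apply Rmax_r].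
          + eapply Rlt_le_trans; [apply (HM V HV h Hh)|apply Rmax_l]. }
      destruct Hm as [M HM]. exists M. intros h Hh. destruct (HL2 h Hh) as [U [HU HUh]]. eauto. }
  set (Mb := fun n => epsilon (inhabits 0) (fun M => forall h, K n h -> Rabs (cval h (xs n)) < M)).
  assert (HMb : forall n h, K n h -> Rabs (cval h (xs n)) < Mb n).
  { intros n. apply (epsilon_spec (inhabits 0) (fun M => forall h, K n h -> Rabs (cval h (xs n)) < M)). auto. }
  set (idx := fun x => epsilon (inhabits 0%nat) (fun k => x = xs k)).
  set (f := fun x => Rabs (Mb (idx x)) + 1).
  destruct (Hcov (exist _ f (cont_discrete tau f Hd))) as [n Hn].
  specialize (HMb n _ Hn). unfold cval in HMb; simpl in HMb. unfold f, idx in HMb.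
  rewrite idx_spec in HMb by auto.
  rewrite Rabs_right in HMb; [|pose proof (Rabs_pos (Mb n)); lra].
  pose proof (RRle_abs (Mb n)). lra.
Qed.

Lemma inv_pos_n (n : nat) : 0 < / (INR n + 1).
Proof. apply Rinv_0_lt_compat. pose proof (pos_INR n). lra. Qed.

Lemma cont_scale {X : Type} (tau : (X -> Prop) -> Prop) (c : R) (f : X -> R) :
  0 <= c -> continuous_R tau f -> continuous_R tau (fun x => f x * c).
Proof.
  intros Hc Hf. apply (cont_lip1 tau (fun t => t * c) c f); auto.
  intros a b. replace (a * c - b * c) with ((a - b) * c) by ring. rewrite Rabs_mult.
  rewrite (Rabs_right c) by lra. lra.
Qed.

Lemma Ma_nondiscrete {X : Type} (tau : (X -> Prop) -> Prop) (Ht : is_topology tau) (Hty : tychonoff tau)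
  (x0 : X) : ~ tau (fun y => y = x0) -> ~ M_bounded (cadd Ht) (czero Ht) (@Cu_top X tau).
Proof.
  intros Hx0 HM.
  set (r := fun n : nat => / (INR n + 1) / 3).
  assert (Hr : forall n, 0 < r n). { intros n. unfold r. pose proof (inv_pos_n n). lra. }
  destruct (HM (fun n g => forall x, Rabs (cval g x) < r n)) as [A HA].
  { intros n. apply Cu_ball_nbhd. auto. }
  assert (Hy : forall n, exists y, y <> x0 /\ forall a, In a (A n) -> Rabs (cval a y - cval a x0) < r n / 2).
  { intros n. destruct (nbhd_list tau Ht x0 (map cval (A n)) (r n / 2)) as [V [HV [HVx HVa]]].
    - pose proof (Hr n); lra.
    - intros a Ha. apply in_map_iff in Ha. destruct Ha as [b [<- _]]. apply (proj2_sig b).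
    - destruct (nonisolated tau x0 Hx0 V HV HVx) as [y [Hyx HVy]]. exists y. split; auto.
      intros a Ha. apply (HVa (cval a) y); auto. apply in_map; auto. }
  set (yn := fun n => epsilon (inhabits x0)
     (fun y => y <> x0 /\ forall a, In a (A n) -> Rabs (cval a y - cval a x0) < r n / 2)).
  assert (Hyn : forall n, yn n <> x0 /\ forall a, In a (A n) -> Rabs (cval a (yn n) - cval a x0) < r n / 2).
  { intros n. apply (epsilon_spec (inhabits x0) (fun y => y <> x0 /\ forall a, In a (A n) -> Rabs (cval a y - cval a x0) < r n / 2)). auto. }
  set (Ppsi := fun n (psi : X -> R) => continuous_R tau psi /\ psi (yn n) = 1 /\
     (forall y, In y (x0 :: nil) -> psi y = 0) /\ (forall x, 0 <= psi x <= 1)).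
  assert (Hpsi_ex : forall n, exists psi, Ppsi n psi).
  { intros n. apply bump; auto. intros y [<-|[]]. intro E. apply (proj1 (Hyn n)). auto. }
  set (psi := fun n => epsilon (inhabits (fun _ : X => 0)) (Ppsi n)).
  assert (Hpsi : forall n, Ppsi n (psi n)).
  { intros n. apply (epsilon_spec (inhabits (fun _ : X => 0)) (Ppsi n)). auto. }
  destruct (sup_fun tau Ht (fun n x => psi n x * / (INR n + 1))) as [F [HF [HFup HFlub]]].
  { intros k. apply cont_scale. pose proof (inv_pos_n k); lra. apply (Hpsi k). }
  { intros k x. destruct (Hpsi k) as [_ [_ [_ Hb]]]. specialize (Hb x). pose proof (inv_pos_n k).
    split; nra. }
  destruct (HA (exist _ F HF)) as [n [a [u [Ha [Hu E]]]]].
  apply (f_equal cval) in E.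
  assert (E' : forall x, F x = cval a x + cval u x).
  { intros x. apply (f_equal (fun h => h x)) in E. exact E. }
  assert (HF0 : F x0 = 0).
  { apply Rle_antisym.
    - apply HFlub. intros k. destruct (Hpsi k) as [_ [_ [Hz _]]]. rewrite (Hz x0); simpl; auto. lra.
    - pose proof (HFup 0%nat x0). destruct (Hpsi 0%nat) as [_ [_ [Hz _]]]. rewrite (Hz x0) in H; simpl; auto. lra. }
  assert (HFy : / (INR n + 1) <= F (yn n)).
  { pose proof (HFup n (yn n)). destruct (Hpsi n) as [_ [H1 _]]. rewrite H1 in H. lra. }
  pose proof (E' x0). pose proof (E' (yn n)). pose proof (Hu x0). pose proof (Hu (yn n)).
  pose proof (proj2 (Hyn n) a Ha).
  assert (Hrn : / (INR n + 1) = 3 * r n) by (unfold r; field; pose proof (pos_INR n); lra).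
  rewrite Hrn in HFy.
  revert H H0 H1 H2 H3. unfold Rabs. repeat destruct Rcase_abs; intros; lra.
Qed.

Lemma Sp_nondiscrete {X : Type} (tau : (X -> Prop) -> Prop) (Ht : is_topology tau) (Hty : tychonoff tau)
  (x0 : X) : ~ tau (fun y => y = x0) -> ~ sigma_compact (@Cp_top X tau).
Proof.
  intros Hx0 [K [HK Hcov]].
  set (r := fun n : nat => / (INR n + 1)).
  assert (Hr : forall n, 0 < r n) by (intros; apply inv_pos_n).
  set (O0 := fun n (h : CX tau) => cval h x0 < 1 - r n / 2).
  set (Oy := fun n y (h : CX tau) => 1 - 3 * r n / 4 < cval h y).
  assert (Hys : forall n, exists ys, (forall y, In y ys -> y <> x0) /\ forall h, K n h ->
     O0 n h \/ exists y, In y ys /\ Oy n y h).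
  { intros n.
    destruct (HK n (fun U => U = O0 n \/ exists y, y <> x0 /\ U = Oy n y)) as [L [HL1 HL2]].
    - intros U [->|[y [_ ->]]].
      + apply (Cp_open_pt tau x0 (fun t => t < 1 - r n / 2)). intros t Htt.
        exists (1 - r n / 2 - t). split; [lra|]. intros s Hs. revert Hs; unfold Rabs; destruct Rcase_abs; intros; lra.
      + apply (Cp_open_pt tau y (fun t => 1 - 3 * r n / 4 < t)). intros t Htt.
        exists (t - (1 - 3 * r n / 4)). split; [lra|]. intros s Hs. revert Hs; unfold Rabs; destruct Rcase_abs; intros; lra.
    - intros h _. destruct (Rlt_dec (cval h x0) (1 - r n / 2)) as [Hl|Hl].
      + exists (O0 n). auto.
      + destruct (proj2_sig h x0 (r n / 4)) as [V [HV [HVx HVh]]]. { pose proof (Hr n); lra. }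
        destruct (nonisolated tau x0 Hx0 V HV HVx) as [y [Hyx HVy]].
        exists (Oy n y). split; [right; eauto|]. specialize (HVh y HVy). unfold Oy.
        revert HVh. unfold cval, Rabs. destruct Rcase_abs; intros; unfold cval in Hl; lra.
    - assert (Hex : exists ys, (forall y, In y ys -> y <> x0) /\ forall U, In U L ->
         U = O0 n \/ exists y, In y ys /\ U = Oy n y).
      { clear HL2. induction L as [|U L IH].
        - exists nil. split; intros ? [].
        - destruct IH as [ys [Hys1 Hys2]]. { intros V HV; apply HL1; simpl; auto. }
          destruct (HL1 U (or_introl eq_refl)) as [->|[y [Hyx ->]]].
          + exists ys. split; auto. intros V [<-|HV]; auto.
          + exists (y :: ys). split. * intros z [<-|Hz]; auto.
            * intros V [<-|HV]. right; exists y; simpl; auto.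
              destruct (Hys2 V HV) as [?|[z [Hz ?]]]; auto. right; exists z; simpl; auto. }
      destruct Hex as [ys [Hys1 Hys2]]. exists ys. split; auto.
      intros h Hh. destruct (HL2 h Hh) as [U [HU HUh]]. destruct (Hys2 U HU) as [->|[y [Hy ->]]]; eauto. }
  set (Pys := fun n ys => (forall y, In y ys -> y <> x0) /\ forall h, K n h ->
     O0 n h \/ exists y, In y ys /\ Oy n y h).
  set (ysn := fun n => epsilon (inhabits nil) (Pys n)).
  assert (Hysn : forall n, Pys n (ysn n)).
  { intros n. apply (epsilon_spec (inhabits nil) (Pys n)). apply Hys. }
  set (Pphi := fun n (phi : X -> R) => continuous_R tau phi /\ phi x0 = 1 /\
     (forall y, In y (ysn n) -> phi y = 0) /\ (forall x, 0 <= phi x <= 1)).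
  assert (Hphi_ex : forall n, exists phi, Pphi n phi).
  { intros n. apply bump; auto. apply (proj1 (Hysn n)). }
  set (phi := fun n => epsilon (inhabits (fun _ : X => 0)) (Pphi n)).
  assert (Hphi : forall n, Pphi n (phi n)).
  { intros n. apply (epsilon_spec (inhabits (fun _ : X => 0)) (Pphi n)). auto. }
  destruct (sup_fun tau Ht (fun n x => (1 - phi n x) * r n)) as [F [HF [HFup HFlub]]].
  { intros k. apply cont_scale. pose proof (Hr k); lra.
    apply (cont_lip1 tau (fun t => 1 - t) 1 (phi k)); [lra| |apply (Hphi k)].
    intros a b. replace (1 - a - (1 - b)) with (- (a - b)) by ring. rewrite Rabs_Ropp. lra. }
  { intros k x. destruct (Hphi k) as [_ [_ [_ Hb]]]. specialize (Hb x). pose proof (Hr k).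
    fold (r k). split; nra. }
  assert (Hu : continuous_R tau (fun x => 1 - F x)).
  { apply (cont_lip1 tau (fun t => 1 - t) 1 F); [lra| |auto].
    intros a b. replace (1 - a - (1 - b)) with (- (a - b)) by ring. rewrite Rabs_Ropp. lra. }
  destruct (Hcov (exist _ _ Hu)) as [n Hn].
  destruct (proj2 (Hysn n) _ Hn) as [H0|[y [Hy H1]]].
  - unfold O0, cval in H0; simpl in H0.
    assert (F x0 <= 0).
    { apply HFlub. intros k. destruct (Hphi k) as [_ [H1 _]]. rewrite H1. lra. }
    pose proof (Hr n). lra.
  - unfold Oy, cval in H1; simpl in H1.
    pose proof (HFup n y). destruct (Hphi n) as [_ [_ [Hz _]]]. rewrite (Hz y Hy) in H.
    pose proof (Hr n). lra.
Qed.

Lemma min_pos {X : Type} (l : list X) (e : X -> R) : (forall x, 0 < e x) ->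
  exists d, 0 < d /\ forall x, In x l -> d <= e x.
Proof.
  intros He. induction l as [|y l IH].
  - exists 1. split; [lra|intros x []].
  - destruct IH as [d [Hd Hdl]]. exists (Rmin d (e y)). split.
    + apply Rmin_glb_lt; auto.
    + intros x [<-|Hx]; [apply Rmin_r|]. eapply Rle_trans; [apply Rmin_l|auto].
Qed.

Lemma Cm_nbhd_delta {X : Type} (tau : (X -> Prop) -> Prop) (Ht : is_topology tau) (l : list X)
  (Hl : forall x, In x l) (U : CX tau -> Prop) :
  nbhd (@Cm_top X tau) (czero Ht) U ->
  exists d, 0 < d /\ forall g, (forall x, Rabs (cval g x) < d) -> U g.
Proof.
  intros [W [HW [HW0 HWU]]]. destruct (HW _ HW0) as [N [[eps [Hpos HN]] HNW]].
  destruct (min_pos l (cval eps) Hpos) as [d [Hd Hdl]].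
  exists d. split; auto. intros g Hg. apply HWU, HNW, HN. intros x.
  unfold czero, cval at 2; simpl. rewrite Rminus_0_r. specialize (Hdl x (Hl x)).
  specialize (Hg x). lra.
Qed.

Lemma nat_above (t : R) : exists B : nat, t <= INR B.
Proof.
  destruct (archimed t) as [H1 _]. destruct (Rle_dec t 0) as [Ht|Ht].
  - exists 0%nat. simpl. lra.
  - exists (Z.to_nat (up t)). assert (Hz : (0 <= up t)%Z) by (apply le_IZR; lra).
    rewrite INR_IZR_INZ, Z2Nat.id by auto. lra.
Qed.

Lemma bound_list {X : Type} (l : list X) (h : X -> R) :
  exists B : nat, forall x, In x l -> Rabs (h x) <= INR B.
Proof.
  induction l as [|y l IH].
  - exists 0%nat. intros x [].
  - destruct IH as [B HB]. destruct (nat_above (Rabs (h y))) as [B' HB'].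
    exists (Nat.max B B'). intros x [<-|Hx].
    + eapply Rle_trans; [apply HB'|apply le_INR; lia].
    + eapply Rle_trans; [apply HB; auto|apply le_INR; lia].
Qed.

Lemma bound_nat {X : Type} (l : list X) (Hl : forall x, In x l) (h : X -> R) :
  exists B : nat, forall x, Rabs (h x) <= INR B.
Proof. destruct (bound_list l h) as [B HB]. exists B. auto. Qed.

Lemma values_interval (d : R) (m : nat) (a : R) : 0 < d ->
  exists V : list R, forall t, a <= t <= a + INR m * d -> exists v, In v V /\ Rabs (t - v) < d.
Proof.
  intros Hd. induction m as [|m IH].
  - exists (a :: nil). intros t Ht. exists a. split; [simpl; auto|]. simpl in Ht.
    replace (t - a) with 0 by lra. rewrite Rabs_R0. auto.
  - destruct IH as [V HV]. exists ((a + INR (S m) * d) :: V). intros t Ht.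
    destruct (Rle_dec t (a + INR m * d)) as [Hl|Hl].
    + destruct (HV t) as [v [Hv Hvt]]; [lra|]. exists v; simpl; auto.
    + exists (a + INR (S m) * d). split; [simpl; auto|]. rewrite S_INR in *.
      unfold Rabs; destruct Rcase_abs; lra.
Qed.

Lemma values_exist (n d : R) : 0 < d ->
  exists V : list R, forall t, Rabs t <= n -> exists v, In v V /\ Rabs (t - v) < d.
Proof.
  intros Hd. destruct (nat_above (2 * n / d)) as [m Hm].
  destruct (values_interval d m (- n) Hd) as [V HV]. exists V. intros t Ht. apply HV.
  assert (2 * n <= INR m * d).
  { apply (Rmult_le_compat_r d) in Hm; [|lra]. unfold Rdiv in Hm.
    rewrite Rmult_assoc, Rinv_l in Hm; lra. }
  revert Ht; unfold Rabs; destruct Rcase_abs; intros; lra.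
Qed.

Definition upd {X : Type} (g : X -> R) (y : X) (v : R) : X -> R :=
  fun x => if excluded_middle_informative (x = y) then v else g x.

Lemma grid_exist {X : Type} (V : list R) (n d : R) (ys : list X) :
  (forall t, Rabs t <= n -> exists v, In v V /\ Rabs (t - v) < d) ->
  exists G : list (X -> R), forall h : X -> R, (forall x, Rabs (h x) <= n) ->
    exists g, In g G /\ forall x, In x ys -> Rabs (h x - g x) < d.
Proof.
  intros HV. induction ys as [|y ys IH].
  - exists ((fun _ => 0) :: nil). intros h _. exists (fun _ => 0). split; [simpl; auto|intros x []].
  - destruct IH as [G HG].
    exists (flat_map (fun g => map (fun v => upd g y v) V) G). intros h Hh.
    destruct (HG h Hh) as [g [Hg Hgx]]. destruct (HV (h y) (Hh y)) as [v [Hv Hvy]].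
    exists (upd g y v). split.
    + apply in_flat_map. exists g. split; auto. apply in_map; auto.
    + intros x Hx. unfold upd. destruct excluded_middle_informative as [->|Hne]; auto.
      destruct Hx as [<-|Hx]; [congruence|auto].
Qed.

Lemma history_length {T : Type} (U : nat -> T -> Prop) n : length (history U n) = S n.
Proof. unfold history. rewrite length_map, length_seq. auto. Qed.

Lemma history_last {T : Type} (U : nat -> T -> Prop) n d : last (history U n) d = U n.
Proof. unfold history. rewrite seq_S, map_app. simpl. apply last_last. Qed.

Lemma finite_sH {X : Type} (tau : (X -> Prop) -> Prop) (Ht : is_topology tau) (Hty : tychonoff tau) :
  finite_type X -> strictly_H_bounded (cadd Ht) (czero Ht) (@Cm_top X tau).
Proof.
  intros Hfin. pose proof (finite_discrete tau Ht (proj1 Hty) Hfin) as Hd.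
  destruct Hfin as [l Hl].
  set (mk := fun h : X -> R => exist (continuous_R tau) h (cont_discrete tau h Hd) : CX tau).
  set (dl := fun U : CX tau -> Prop => epsilon (inhabits 1)
     (fun d => 0 < d /\ forall g, (forall x, Rabs (cval g x) < d) -> U g)).
  set (PA := fun (n : nat) (d : R) (A : list (CX tau)) => forall g : CX tau,
     (forall x, Rabs (cval g x) <= INR n) -> exists a, In a A /\ forall x, Rabs (cval g x - cval a x) < d).
  assert (HPA : forall n d, 0 < d -> exists A, PA n d A).
  { intros n d Hd0. destruct (values_exist (INR n) d Hd0) as [V HV].
    destruct (grid_exist V (INR n) d l HV) as [G HG].
    exists (map mk G). intros g Hg. destruct (HG (cval g) Hg) as [h [Hh Hhx]].
    exists (mk h). split; [apply in_map; auto|]. intros x. apply Hhx; auto. }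
  exists (fun hst => epsilon (inhabits nil) (PA (length hst) (dl (last hst (fun _ => True))))).
  intros U HU x. destruct (bound_nat l Hl (cval x)) as [B HB]. exists B. intros n Hn.
  rewrite history_length, history_last.
  assert (Hdl : 0 < dl (U n) /\ forall g, (forall x, Rabs (cval g x) < dl (U n)) -> U n g).
  { apply (epsilon_spec (inhabits 1) (fun d => 0 < d /\ forall g, (forall x, Rabs (cval g x) < d) -> U n g)).
    apply (Cm_nbhd_delta tau Ht l Hl). auto. }
  assert (HA : PA (S n) (dl (U n)) (epsilon (inhabits nil) (PA (S n) (dl (U n))))).
  { apply (epsilon_spec (inhabits nil) (PA (S n) (dl (U n)))). apply HPA. apply Hdl. }
  destruct (HA x) as [a [Ha Hax]].
  { intros y. eapply Rle_trans; [apply HB|]. apply le_INR. lia. }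
  exists a, (mk (fun y => cval x y - cval a y)). split; [auto|split].
  - apply Hdl. intros y. simpl. apply Hax.
  - apply cx_eq. intros y. unfold cadd, cval; simpl. ring.
Qed.

Definition Box2 {X : Type} {tau : (X -> Prop) -> Prop} (lo hi : X -> R) (f : CX tau) : Prop :=
  forall x, lo x <= cval f x <= hi x.

Definition FSC {T : Type} (C : (T -> Prop) -> Prop) (B : T -> Prop) : Prop :=
  exists L, (forall U, In U L -> C U) /\ forall f, B f -> exists U, In U L /\ U f.

Lemma split_box {X : Type} {tau : (X -> Prop) -> Prop} (C : (CX tau -> Prop) -> Prop) lo hi y :
  ~ FSC C (Box2 lo hi) ->
  ~ FSC C (Box2 lo (upd hi y ((lo y + hi y)/2))) \/ ~ FSC C (Box2 (upd lo y ((lo y + hi y)/2)) hi).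
Proof.
  intros H. apply NNPP; intro Hc. apply H.
  apply not_or_and in Hc. destruct Hc as [H1 H2]. apply NNPP in H1, H2.
  destruct H1 as [L1 [HL1 HC1]], H2 as [L2 [HL2 HC2]].
  exists (L1 ++ L2). split.
  - intros U HU. apply in_app_or in HU. destruct HU; auto.
  - intros f Hf. destruct (Rle_dec (cval f y) ((lo y + hi y)/2)) as [Hle|Hle].
    + destruct (HC1 f) as [U [HU HUf]].
      { intros x. unfold upd. destruct excluded_middle_informative as [->|]; auto.
        split; [apply Hf|auto]. }
      exists U. split; auto. apply in_or_app; auto.
    + destruct (HC2 f) as [U [HU HUf]].
      { intros x. unfold upd. destruct excluded_middle_informative as [->|]; auto.
        split; [lra|apply Hf]. }
      exists U. split; auto. apply in_or_app; auto.
Qed.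

Lemma halve_box {X : Type} {tau : (X -> Prop) -> Prop} (C : (CX tau -> Prop) -> Prop) (ys : list X) :
  forall lo hi, (forall x, lo x <= hi x) -> ~ FSC C (Box2 lo hi) ->
  exists lo' hi', (forall x, lo' x <= hi' x) /\ ~ FSC C (Box2 lo' hi') /\
    forall x, lo x <= lo' x /\ hi' x <= hi x /\ (In x ys -> hi' x - lo' x <= (hi x - lo x) / 2).
Proof.
  induction ys as [|y ys IH]; intros lo hi Hlh Hn.
  - exists lo, hi. split; auto. split; auto. intros x. split; [lra|split; [lra|intros []]].
  - set (m := (lo y + hi y) / 2).
    assert (Hlh' : forall x, lo x <= upd hi y m x /\ upd lo y m x <= hi x).
    { intros x. unfold upd, m. destruct excluded_middle_informative as [->|]; [|auto].
      specialize (Hlh y). lra. }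
    assert (Hst : exists lo1 hi1, (forall x, lo1 x <= hi1 x) /\ ~ FSC C (Box2 lo1 hi1) /\
      forall x, lo x <= lo1 x /\ hi1 x <= hi x /\ hi1 x - lo1 x <= hi x - lo x /\
        (x = y -> hi1 x - lo1 x <= (hi x - lo x) / 2)).
    { destruct (split_box C lo hi y Hn) as [H1|H1].
      - exists lo, (upd hi y m). split; [intros; apply Hlh'|split; [auto|]].
        intros x. unfold upd, m. destruct excluded_middle_informative as [->|Hne].
        + specialize (Hlh y). lra.
        + specialize (Hlh x). split; [lra|split; [lra|split; [lra|intros; congruence]]].
      - exists (upd lo y m), hi. split; [intros; apply Hlh'|split; [auto|]].
        intros x. unfold upd, m. destruct excluded_middle_informative as [->|Hne].
        + specialize (Hlh y). lra.
        + specialize (Hlh x). split; [lra|split; [lra|split; [lra|intros; congruence]]]. }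
    destruct Hst as [lo1 [hi1 [Hlh1 [Hn1 Hst]]]].
    destruct (IH lo1 hi1 Hlh1 Hn1) as [lo' [hi' [Hlh2 [Hn2 Hst2]]]].
    exists lo', hi'. split; auto. split; auto. intros x.
    destruct (Hst x) as [A1 [A2 [A3 A4]]]. destruct (Hst2 x) as [B1 [B2 B3]].
    split; [lra|split; [lra|]]. intros [E|Hx].
    + subst x. specialize (A4 eq_refl). specialize (Hlh2 y). specialize (Hlh1 y).
      destruct (classic (In y ys)) as [Hi|Hi]; [specialize (B3 Hi); lra|lra].
    + specialize (B3 Hx). lra.
Qed.

Fixpoint iterp {A : Type} (f : A -> A) (a : A) (n : nat) : A :=
  match n with 0 => a | S n => f (iterp f a n) end.

Lemma INR_le_pow2 (k : nat) : INR k + 1 <= 2 ^ k /\ 1 <= 2 ^ k.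
Proof.
  induction k as [|k IH]; [simpl; lra|]. rewrite S_INR. change (2 ^ S k) with (2 * 2 ^ k). destruct IH; lra.
Qed.

Lemma box_compact {X : Type} (tau : (X -> Prop) -> Prop) (Ht : is_topology tau) (l : list X)
  (Hl : forall x, In x l) (Hd : forall x, tau (fun y => y = x)) (a : R) : 0 <= a ->
  compact_subset (@Cm_top X tau) (Box2 (fun _ => - a) (fun _ => a)).
Proof.
  intros Ha C HC Hcov. apply NNPP. intro Hno. change (~ FSC C (Box2 (fun _ => - a) (fun _ => a))) in Hno.
  set (P := fun (p q : (X -> R) * (X -> R)) => (forall x, fst q x <= snd q x) /\ ~ FSC C (Box2 (fst q) (snd q)) /\
     forall x, fst p x <= fst q x /\ snd q x <= snd p x /\ snd q x - fst q x <= (snd p x - fst p x) / 2).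
  set (step := fun p => epsilon (inhabits p) (P p)).
  set (s := iterp step ((fun _ => - a), (fun _ => a))).
  assert (Hinv : forall k, (forall x, fst (s k) x <= snd (s k) x) /\ ~ FSC C (Box2 (fst (s k)) (snd (s k)))
     /\ P (s k) (s (S k))).
  { induction k as [|k IH].
    - assert (H0 : (forall x, fst (s 0%nat) x <= snd (s 0%nat) x) /\ ~ FSC C (Box2 (fst (s 0%nat)) (snd (s 0%nat)))).
      { simpl. split; auto. intros; lra. }
      split; [apply H0|split; [apply H0|]].
      simpl. apply (epsilon_spec (inhabits (s 0%nat)) (P (s 0%nat))).
      destruct (halve_box C l (fst (s 0%nat)) (snd (s 0%nat)) (proj1 H0) (proj2 H0)) as [lo' [hi' [A1 [A2 A3]]]].
      exists (lo', hi'). split; auto. split; auto. intros x. destruct (A3 x) as [B1 [B2 B3]]. simpl in *. auto.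
    - destruct IH as [_ [_ [H1 [H2 _]]]]. split; auto. split; auto.
      change (s (S (S k))) with (step (s (S k))).
      apply (epsilon_spec (inhabits (s (S k))) (P (s (S k)))).
      destruct (halve_box C l (fst (s (S k))) (snd (s (S k))) H1 H2) as [lo' [hi' [A1 [A2 A3]]]].
      exists (lo', hi'). split; auto. split; auto. intros x. destruct (A3 x) as [B1 [B2 B3]]. simpl in *. auto. }
  set (lo := fun k => fst (s k)). set (hi := fun k => snd (s k)).
  assert (Hlomono : forall k j x, (k <= j)%nat -> lo k x <= lo j x).
  { intros k j x Hkj. induction Hkj; [lra|]. destruct (Hinv m) as [_ [_ [_ [_ H]]]].
    destruct (H x) as [H1 _]. unfold lo in *. lra. }
  assert (Hhimono : forall k j x, (k <= j)%nat -> hi j x <= hi k x).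
  { intros k j x Hkj. induction Hkj; [lra|]. destruct (Hinv m) as [_ [_ [_ [_ H]]]].
    destruct (H x) as [_ [H1 _]]. unfold hi in *. lra. }
  assert (Hlohi : forall k j x, lo k x <= hi j x).
  { intros k j x. destruct (Hinv (Nat.max k j)) as [H _].
    pose proof (Hlomono k (Nat.max k j) x ltac:(lia)). pose proof (Hhimono j (Nat.max k j) x ltac:(lia)).
    specialize (H x). unfold lo, hi in *. lra. }
  assert (Hwidth : forall k x, hi k x - lo k x <= 2 * a / 2 ^ k).
  { induction k as [|k IH]; intros x.
    - unfold hi, lo; simpl. lra.
    - destruct (Hinv k) as [_ [_ [_ [_ H]]]]. destruct (H x) as [_ [_ H3]].
      specialize (IH x). unfold hi, lo in *. change (2 ^ S k) with (2 * 2 ^ k).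
      pose proof (INR_le_pow2 k) as [_ Hp].
      assert (E : 2 * a / (2 * 2 ^ k) = (2 * a / 2 ^ k) / 2) by (field; lra). rewrite E. lra. }
  assert (Hp_ex : forall x, exists m, is_lub (fun v => exists k, v = lo k x) m).
  { intros x. destruct (completeness (fun v => exists k, v = lo k x)) as [m Hm].
    - exists (hi 0%nat x). intros v [k ->]. auto.
    - exists (lo 0%nat x). eauto.
    - eauto. }
  set (p := fun x => epsilon (inhabits 0) (fun m => is_lub (fun v => exists k, v = lo k x) m)).
  assert (Hp : forall x, is_lub (fun v => exists k, v = lo k x) (p x)).
  { intros x. apply (epsilon_spec (inhabits 0) (fun m => is_lub (fun v => exists k, v = lo k x) m)). auto. }
  assert (Hpin : forall k x, lo k x <= p x <= hi k x).
  { intros k x. split. - apply (proj1 (Hp x)). eauto. - apply (proj2 (Hp x)). intros v [j ->]. auto. }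
  set (pC := exist (continuous_R tau) p (cont_discrete tau p Hd) : CX tau).
  destruct (Hcov pC) as [U [HCU HUp]].
  { intros x. apply (Hpin 0%nat x). }
  destruct (HC U HCU pC HUp) as [N [[eps [Hpos HN]] HNU]].
  destruct (min_pos l (cval eps) Hpos) as [d [Hd0 Hdl]].
  destruct (nat_above (2 * a / d)) as [k Hk].
  apply Hno.
  exfalso. apply (proj1 (proj2 (Hinv k))).
  exists (U :: nil). split; [intros V [<-|[]]; auto|].
  intros f Hf. exists U. split; [simpl; auto|]. apply HNU. apply HN. intros x.
  specialize (Hf x). specialize (Hpin k x). specialize (Hwidth k x). specialize (Hdl x (Hl x)).
  pose proof (INR_le_pow2 k) as [Hk1 Hk2].
  assert (2 * a / 2 ^ k < d).
  { apply (Rmult_le_compat_r d) in Hk; [|lra]. unfold Rdiv in Hk. rewrite Rmult_assoc, Rinv_l, Rmult_1_r in Hk by lra.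
    assert (2 * a < d * 2 ^ k) by nra.
    apply (Rmult_lt_reg_r (2 ^ k)); [lra|]. unfold Rdiv. rewrite Rmult_assoc, Rinv_l, Rmult_1_r by lra. lra. }
  unfold lo, hi in *. simpl in Hpin. unfold cval at 2; simpl.
  revert Hf Hpin. unfold Rabs. destruct Rcase_abs; intros; lra.
Qed.

Lemma finite_sigma {X : Type} (tau : (X -> Prop) -> Prop) (Ht : is_topology tau) (Hty : tychonoff tau) :
  finite_type X -> sigma_compact (@Cm_top X tau).
Proof.
  intros Hfin. pose proof (finite_discrete tau Ht (proj1 Hty) Hfin) as Hd.
  destruct Hfin as [l Hl].
  exists (fun n => Box2 (fun _ => - INR n) (fun _ => INR n)). split.
  - intros n. apply (box_compact tau Ht l Hl Hd). apply pos_INR.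
  - intros f. destruct (bound_nat l Hl (cval f)) as [B HB]. exists B. intros x.
    specialize (HB x). revert HB; unfold Rabs; destruct Rcase_abs; intros; lra.
Qed.

Lemma MCu_fin {X : Type} (tau : (X -> Prop) -> Prop) (Ht : is_topology tau) (Hty : tychonoff tau) :
  M_bounded (cadd Ht) (czero Ht) (@Cu_top X tau) -> finite_type X.
Proof.
  intros HM. apply NNPP; intro Hnf.
  destruct (classic (forall x, tau (fun y => y = x))) as [Hd|Hnd].
  - exact (Ma_discrete tau Ht Hd Hnf HM).
  - apply not_all_ex_not in Hnd. destruct Hnd as [x0 Hx0].
    exact (Ma_nondiscrete tau Ht Hty x0 Hx0 HM).
Qed.

Lemma SCp_fin {X : Type} (tau : (X -> Prop) -> Prop) (Ht : is_topology tau) (Hty : tychonoff tau) :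
  sigma_compact (@Cp_top X tau) -> finite_type X.
Proof.
  intros HS. apply NNPP; intro Hnf.
  destruct (classic (forall x, tau (fun y => y = x))) as [Hd|Hnd].
  - exact (Sp_discrete tau Ht Hd Hnf HS).
  - apply not_all_ex_not in Hnd. destruct Hnd as [x0 Hx0].
    exact (Sp_nondiscrete tau Ht Hty x0 Hx0 HS).
Qed.

Theorem theorem2p8 (X : Type) (tau : (X -> Prop) -> Prop)
  (Ht : is_topology tau) (Hty : tychonoff tau) :
  let Cm := @Cm_top X tau in
  let Cu := @Cu_top X tau in
  let Cp := @Cp_top X tau in
  let add := cadd Ht in
  let e := czero Ht in
  (sigma_compact Cm <-> finite_type X) /\
  (strictly_H_bounded add e Cm <-> finite_type X) /\
  (H_bounded add e Cm <-> finite_type X) /\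
  (strictly_M_bounded add e Cm <-> finite_type X) /\
  (M_bounded add e Cm <-> finite_type X) /\
  (M_bounded add e Cu <-> finite_type X) /\
  (sigma_compact Cp <-> finite_type X).
Proof.
  cbv zeta.
  assert (HCuCm : forall U, @Cu_top X tau U -> @Cm_top X tau U) by apply (Cu_Cm tau Ht).
  assert (HCpCm : forall U, @Cp_top X tau U -> @Cm_top X tau U) by apply (Cp_Cm tau Ht).
  assert (HMfin : M_bounded (cadd Ht) (czero Ht) (@Cm_top X tau) -> finite_type X).
  { intros H. apply (MCu_fin tau Ht Hty). apply (M_mono _ _ _ _ HCuCm H). }
  assert (HsH : finite_type X -> strictly_H_bounded (cadd Ht) (czero Ht) (@Cm_top X tau))
    by apply (finite_sH tau Ht Hty).
  split; [|split; [|split; [|split; [|split; [|split]]]]].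
  - split.
    + intros H. apply (SCp_fin tau Ht Hty). apply (sigma_mono _ _ HCpCm H).
    + apply (finite_sigma tau Ht Hty).
  - split; auto. intros H. apply HMfin. apply H_M. apply sH_H. auto.
  - split. + intros H. apply HMfin. apply H_M. auto. + intros H. apply sH_H. auto.
  - split. + intros H. apply HMfin. apply sM_M. auto. + intros H. apply sH_sM. auto.
  - split; auto. intros H. apply H_M, sH_H. auto.
  - split. + apply (MCu_fin tau Ht Hty).
    + intros H. apply (M_mono _ _ _ _ HCuCm). apply H_M, sH_H. auto.
  - split.
    + apply (SCp_fin tau Ht Hty).
    + intros H. apply (sigma_mono _ _ HCpCm). apply (finite_sigma tau Ht Hty). auto.
Qed.
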